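(* Let $\omega\in\Omega$ be a path and $I$ a closed interval with $I\subseteq(0,1)$. If $\omega$ is wCH-random for $I$, then $\omega$ is not recursive. The same conclusion holds if $\omega$ is $\mathscr S$-random for $I$ for some countable set $\mathscr S$ of selection processes containing all recursive temporal selection processes, or if $\omega$ is $R$-random for $I$ for some $R\in\{\mathrm{ML},\mathrm{wML},\mathrm{C},\mathrm{S}\}$.
   Context: Notation: $\mathbb N=\{1,2,\dots\}$, $\mathbb N_0=\mathbb N\cup\{0\}$. $\Omega=\{0,1\}^{\mathbb N}$ is the set of paths $\omega=(\omega_1,\omega_2,\dots)$; $\omega_{1:n}=(\omega_1,\dots,\omega_n)$, $\omega_{1:0}=\square$. $\mathbb S=\bigcup_{n\in\mathbb N_0}\{0,1\}^n$ is the set of situations, $|s|$ the length, $sx$ concatenation. For $r\in[0,1]$, $f:\{0,1\}\to\mathbb R$: $E_r(f)=rf(1)+(1-r)f(0)$; $\overline E_I(f)=\max_{r\in I}E_r(f)$. A forecasting system is a map $\varphi$ from $\mathbb S$ to closed subintervals of $[0,1]$, with $\underline\varphi(s)=\min\varphi(s)$, $\overline\varphi(s)=\max\varphi(s)$; being random for an interval $I$ means being random for the constant forecasting system with value $I$. Computability: a map from a countable effectively encoded domain ($\mathbb N$, $\mathbb N_0$, $\mathbb S$, products with $\{0,1\}$ and $\mathbb N_0$) to $\mathbb N_0$ or $\mathbb Q$ or $\{0,1\}$ is recursive if Turing-computable; a path is recursive if $n\mapsto\omega_n$ is recursive. A real map $r$ is lower semicomputable if $r(d)=\lim_nq(d,n)$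 for a recursive rational $q$ non-decreasing in $n$, computable if $|r(d)-q(d,n)|<2^{-n}$ for a recursive rational $q$. Selection processes: maps $S:\mathbb S\to\{0,1\}$; temporal if $S(s)$ depends only on $|s|$ (written $S(n)$). For a countable set $\mathscr S$ of selection processes, $\omega$ is $\mathscr S$-random for $\varphi$ if for every $S\in\mathscr S$ with $\lim_n\sum_{k=0}^{n-1}S(\omega_{1:k})=\infty$: $\liminf_n\frac{\sum_{k=0}^{n-1}S(\omega_{1:k})[\omega_{k+1}-\underline\varphi(\omega_{1:k})]}{\sum_{k=0}^{n-1}S(\omega_{1:k})}\ge0$ and $\limsup_n\frac{\sum_{k=0}^{n-1}S(\omega_{1:k})[\omega_{k+1}-\overline\varphi(\omega_{1:k})]}{\sum_{k=0}^{n-1}S(\omega_{1:k})}\le0$. $\omega$ is wCH-random for $\varphi$ if it is $\mathscr S$-random for $\varphi$ with $\mathscr S$ the set of all recursive temporal selection processes. Martingale-theoretic randomness: a real process is $F:\mathbb S\to\mathbb R$, $\Delta F(s)$ is $x\mapsto F(sx)-F(s)$; $M$ is a supermartingale for $\varphi$ if $\overline E_{\varphi(s)}(\Delta M(s))\le0$ for all $s$. A test process is a non-negative real process with $F(\square)=1$; a test supermartingale for $\varphi$ is a test process that is a supermartingale for $\varphi$. A multiplier process $D$ assigns to each $s$ a function $D(s):\{0,1\}\to[0,\infty)$ and generates the test process $F(\square)=1$, $F(sx)=F(s)D(s)(x)$. $\mathscr F_{\mathrm{ML}}$: lower semicomputable test processes; $\mathscr F_{\mathrm{wML}}$: test processes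 generated by lower semicomputable multiplier processes; $\mathscr F_{\mathrm C}=\mathscr F_{\mathrm S}$: positive rational-valued recursive test processes. $\overline{\mathbb T}_R(\varphi)$: elements of $\mathscr F_R$ that are test supermartingales for $\varphi$. For $R\in\{\mathrm{ML},\mathrm{wML},\mathrm C\}$, $\omega$ is $R$-random for $\varphi$ if no $T\in\overline{\mathbb T}_R(\varphi)$ has $\limsup_nT(\omega_{1:n})=\infty$. A real growth function is a computable, non-decreasing, unbounded $\tau:\mathbb N_0\to[0,\infty)$; $\omega$ is S-random for $\varphi$ if there are no $T\in\overline{\mathbb T}_{\mathrm S}(\varphi)$ and real growth function $\tau$ with $\limsup_n[T(\omega_{1:n})-\tau(n)]\ge0$. *)

(* Defs.v *)
From Stdlib Require Import Reals Lra List.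
From Coquelicot Require Import Coquelicot.
Open Scope R_scope.

Inductive code : Type :=
| CZero
| CSucc
| CProj (i : nat)
| CComp (f : code) (gs : list code)
| CPrec (f g : code)
| CMu (f : code).

Inductive eval : code -> list nat -> nat -> Prop :=
| ev_zero v : eval CZero v 0
| ev_succ v : eval CSucc v (S (hd 0%nat v))
| ev_proj i v : eval (CProj i) v (nth i v 0%nat)
| ev_comp f gs v ws y :
    Forall2 (fun g w => eval g v w) gs ws -> eval f ws y -> eval (CComp f gs) v y
| ev_prec0 f g v y : eval f v y -> eval (CPrec f g) (0%nat :: v) y
| ev_precS f g n v z y :
    eval (CPrec f g) (n :: v) z -> eval g (n :: z :: v) y ->
    eval (CPrec f g) (S n :: v) y
| ev_mu f v n :
    eval f (n :: v) 0%nat ->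
    (forall m, (m < n)%nat -> exists k, k <> 0%nat /\ eval f (m :: v) k) ->
    eval (CMu f) v n.

Definition recursive_nat (f : nat -> nat) : Prop :=
  exists c : code, forall n, eval c (n :: nil) (f n).

Definition cpair (x y : nat) : nat := (Nat.div ((x + y) * (x + y + 1)) 2 + y)%nat.

(* bijective encoding of situations (finite bit strings) *)
Fixpoint enc_sit (s : list bool) : nat :=
  match s with
  | nil => 0%nat
  | b :: s' => (2 * enc_sit s' + (if b then 2 else 1))%nat
  end.

Definition nat_of_bool (b : bool) : nat := if b then 1%nat else 0%nat.

Definition recursive_on {D : Type} (enc : D -> nat) (f : D -> nat) : Prop :=
  exists g : nat -> nat, recursive_nat g /\ forall d, f d = g (enc d).

Definition recursive_rat_on {D : Type} (enc : D -> nat) (f : D -> R) : Prop :=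
  exists p m q : D -> nat,
    recursive_on enc p /\ recursive_on enc m /\ recursive_on enc q /\
    forall d, f d = (INR (p d) - INR (m d)) / (INR (q d) + 1).

Definition lower_semicomputable {D : Type} (enc : D -> nat) (r : D -> R) : Prop :=
  exists q : D -> nat -> R,
    recursive_rat_on (fun dn : D * nat => cpair (enc (fst dn)) (snd dn))
                     (fun dn => q (fst dn) (snd dn)) /\
    (forall d n, q d n <= q d (S n)) /\
    (forall d, is_lim_seq (q d) (r d)).

Definition computable_real {D : Type} (enc : D -> nat) (r : D -> R) : Prop :=
  exists q : D -> nat -> R,
    recursive_rat_on (fun dn : D * nat => cpair (enc (fst dn)) (snd dn))
                     (fun dn => q (fst dn) (snd dn)) /\
    (forall d n, Rabs (r d - q d n) < / 2 ^ n).

(* A path omega = (omega_1, omega_2, ...) is represented as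
   [omega : nat -> bool] with [omega k] = omega_{k+1}. *)
Definition path := nat -> bool.
Definition sit := list bool.

Definition prefix (omega : path) (n : nat) : sit := map omega (seq 0 n).

Definition b2R (b : bool) : R := if b then 1 else 0.

Definition recursive_path (omega : path) : Prop :=
  recursive_nat (fun n => nat_of_bool (omega n)).

Fixpoint psum (u : nat -> R) (n : nat) : R :=
  match n with
  | O => 0
  | S n' => psum u n' + u n'
  end.

Definition selection := sit -> bool.

Definition temporal (S : selection) : Prop :=
  forall s t : sit, length s = length t -> S s = S t.

Definition recursive_selection (S : selection) : Prop :=
  recursive_on enc_sit (fun s => nat_of_bool (S s)).

Definition rec_temporal (S : selection) : Prop :=
  recursive_selection S /\ temporal S.

Definition countable_set {T : Type} (SS : T -> Prop) : Prop :=
  exists e : nat -> T, forall x, SS x -> exists n, e n = x.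

(* omega is SS-random for the constant forecasting system I = [a, b]
   (lower forecast a, upper forecast b). *)
Definition sel_random (SS : selection -> Prop) (omega : path) (a b : R) : Prop :=
  forall S : selection, SS S ->
    let sel k := b2R (S (prefix omega k)) in
    is_lim_seq (psum sel) p_infty ->
    Rbar_le (Finite 0)
      (LimInf_seq (fun n => psum (fun k => sel k * (b2R (omega k) - a)) n
                            / psum sel n)) /\
    Rbar_le
      (LimSup_seq (fun n => psum (fun k => sel k * (b2R (omega k) - b)) n
                            / psum sel n)) (Finite 0).

Definition wCH_random (omega : path) (a b : R) : Prop :=
  sel_random rec_temporal omega a b.

Definition process := sit -> R.

Definition Er (r : R) (f : bool -> R) : R := r * f true + (1 - r) * f false.

Definition Delta (F : process) (s : sit) : bool -> R :=
  fun x => F (s ++ x :: nil) - F s.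

Definition supermartingale (M : process) (a b : R) : Prop :=
  forall s : sit, forall r, a <= r <= b -> Er r (Delta M s) <= 0.

Definition test_process (F : process) : Prop :=
  F nil = 1 /\ forall s, 0 <= F s.

Definition test_supermartingale (T : process) (a b : R) : Prop :=
  test_process T /\ supermartingale T a b.

Definition multiplier_process (D : sit -> bool -> R) : Prop :=
  forall s x, 0 <= D s x.

Definition generated_by (D : sit -> bool -> R) (F : process) : Prop :=
  F nil = 1 /\ forall s x, F (s ++ x :: nil) = F s * D s x.

Definition enc_sit_bool (sx : sit * bool) : nat :=
  cpair (enc_sit (fst sx)) (nat_of_bool (snd sx)).

Definition F_ML (T : process) : Prop :=
  test_process T /\ lower_semicomputable enc_sit T.

Definition F_wML (T : process) : Prop :=
  exists D : sit -> bool -> R,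
    multiplier_process D /\
    lower_semicomputable enc_sit_bool (fun sx => D (fst sx) (snd sx)) /\
    generated_by D T.

(* F_C = F_S : positive rational-valued recursive test processes *)
Definition F_C (T : process) : Prop :=
  test_process T /\ (forall s, 0 < T s) /\ recursive_rat_on enc_sit T.

Definition martingale_random (FR : process -> Prop) (omega : path) (a b : R) : Prop :=
  ~ exists T : process, FR T /\ test_supermartingale T a b /\
      LimSup_seq (fun n => T (prefix omega n)) = p_infty.

Definition ML_random := martingale_random F_ML.
Definition wML_random := martingale_random F_wML.
Definition C_random := martingale_random F_C.

Definition real_growth_function (tau : nat -> R) : Prop :=
  computable_real (fun n : nat => n) tau /\
  (forall n, 0 <= tau n) /\
  (forall n m, (n <= m)%nat -> tau n <= tau m) /\
  (forall M, exists n, M < tau n).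

Definition S_random (omega : path) (a b : R) : Prop :=
  ~ exists (T : process) (tau : nat -> R),
      F_C T /\ test_supermartingale T a b /\ real_growth_function tau /\
      Rbar_le (Finite 0) (LimSup_seq (fun n => T (prefix omega n) - tau n)).

(* Main.v *)
Require Import Defs.
From Stdlib Require Import Reals Lra Lia List Arith ZArith.
From Coquelicot Require Import Coquelicot.
From Stdlib Require Import ClassicalEpsilon Classical.
Import ListNotations.
Open Scope R_scope.

Definition rc (f : list nat -> nat) : Prop := exists c, forall v, eval c v (f v).

Lemma rc_ext f g : rc f -> (forall v, f v = g v) -> rc g.
Proof. intros [c Hc] E. exists c. intro v. rewrite <- E. apply Hc. Qed.

Lemma rc_zero : rc (fun _ => 0%nat).
Proof. exists CZero. intro; constructor. Qed.

Lemma rc_proj i : rc (fun v => nth i v 0%nat).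
Proof. exists (CProj i). intro; constructor. Qed.

Lemma rc_S g : rc g -> rc (fun v => S (g v)).
Proof.
  intros [c Hc]. exists (CComp CSucc [c]). intro v.
  apply ev_comp with (ws := [g v]). constructor; auto. apply ev_succ.
Qed.

Lemma rc_list (gs : list (list nat -> nat)) : List.Forall rc gs ->
  exists cs, forall v, Forall2 (fun c w => eval c v w) cs (map (fun g => g v) gs).
Proof.
  induction 1 as [|g gs Hg _ IH].
  - exists nil. intro v. constructor.
  - destruct Hg as [c Hc]. destruct IH as [cs Hcs].
    exists (c :: cs). intro v. simpl. constructor; auto.
Qed.

Lemma rc_comp f gs : rc f -> List.Forall rc gs -> rc (fun v => f (map (fun g => g v) gs)).
Proof.
  intros [cf Hf] Hgs. destruct (rc_list gs Hgs) as [cs Hcs].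
  exists (CComp cf cs). intro v. econstructor; eauto.
Qed.

Lemma rc_comp1 f g : rc f -> rc g -> rc (fun v => f [g v]).
Proof. intros Hf Hg. exact (rc_comp f [g] Hf (List.Forall_cons _ Hg (List.Forall_nil _))). Qed.

Lemma rc_comp2 f g1 g2 : rc f -> rc g1 -> rc g2 -> rc (fun v => f [g1 v; g2 v]).
Proof. intros Hf H1 H2. exact (rc_comp f [g1; g2] Hf (List.Forall_cons _ H1 (List.Forall_cons _ H2 (List.Forall_nil _)))). Qed.

Lemma rc_comp3 f g1 g2 g3 : rc f -> rc g1 -> rc g2 -> rc g3 -> rc (fun v => f [g1 v; g2 v; g3 v]).
Proof. intros Hf H1 H2 H3.
  exact (rc_comp f [g1; g2; g3] Hf (List.Forall_cons _ H1 (List.Forall_cons _ H2 (List.Forall_cons _ H3 (List.Forall_nil _))))). Qed.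

Definition tl3 (v : list nat) := [nth 1 v 0; nth 2 v 0; nth 3 v 0]%nat.

Fixpoint primrec (f g : list nat -> nat) (n : nat) (r : list nat) : nat :=
  match n with O => f r | S n' => g (n' :: primrec f g n' r :: r) end.

Lemma rc_prec f g : rc f -> rc g -> rc (fun v => primrec f g (nth 0 v 0%nat) (tl3 v)).
Proof.
  intros [cf Hf] [cg Hg].
  exists (CComp (CPrec cf cg) [CProj 0; CProj 1; CProj 2; CProj 3]).
  intro v. apply ev_comp with (ws := nth 0 v 0%nat :: tl3 v).
  - repeat constructor.
  - generalize (nth 0 v 0%nat). intro n. induction n; simpl.
    + constructor. apply Hf.
    + econstructor. apply IHn. apply Hg.
Qed.

Lemma rc_rec (F : nat -> list nat -> nat) f g : rc f -> rc g ->
  (forall r, F 0%nat r = f r) -> (forall n r, F (S n) r = g (n :: F n r :: r)) ->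
  rc (fun v => F (nth 0 v 0%nat) (tl3 v)).
Proof.
  intros Hf Hg H0 HS. eapply rc_ext. apply (rc_prec f g Hf Hg).
  intro v. cbv beta. generalize (nth 0 v 0%nat). intro n. induction n; simpl.
  - rewrite H0; auto.
  - rewrite HS, IHn; auto.
Qed.

Lemma min_ex (P : nat -> Prop) : (exists n, P n) -> exists n, P n /\ forall k, (k < n)%nat -> ~ P k.
Proof.
  intros [n Hn]. revert Hn. induction n as [n IH] using lt_wf_ind. intro Hn.
  destruct (classic (exists k, (k < n)%nat /\ P k)) as [[k [Hk Pk]]|Hno].
  - exact (IH k Hk Pk).
  - exists n. split; auto. intros k Hk Pk. apply Hno; eauto.
Qed.

Lemma rc_mu f : rc f -> (forall v, exists n, f (n :: v) = 0%nat) ->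
  exists m, rc m /\ forall v, f (m v :: v) = 0%nat /\ forall k, (k < m v)%nat -> f (k :: v) <> 0%nat.
Proof.
  intros [cf Hf] Hex.
  assert (H : forall v, { n | f (n::v) = 0%nat /\ forall k, (k < n)%nat -> f (k::v) <> 0%nat }).
  { intro v. apply constructive_indefinite_description.
    exact (min_ex (fun n => f (n::v) = 0%nat) (Hex v)). }
  exists (fun v => proj1_sig (H v)). split.
  - exists (CMu cf). intro v. destruct (H v) as [n [Hn Hmin]]. simpl. constructor.
    + rewrite <- Hn. apply Hf.
    + intros m Hm. exists (f (m::v)). split; auto.
  - intro v. apply (proj2_sig (H v)).
Qed.

Lemma mu_unique (P : nat -> Prop) m n : P m -> (forall k, (k < m)%nat -> ~ P k) ->
  P n -> (forall k, (k < n)%nat -> ~ P k) -> m = n.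
Proof.
  intros Pm Hm Pn Hn. destruct (Nat.lt_trichotomy m n) as [H|[H|H]]; auto.
  - exfalso; exact (Hn m H Pm).
  - exfalso; exact (Hm n H Pn).
Qed.

Lemma rc_const c : rc (fun _ => c).
Proof. induction c. apply rc_zero. apply (rc_S _ IHc). Qed.

Lemma rc_add : rc (fun v => nth 0 v 0 + nth 1 v 0)%nat.
Proof.
  eapply rc_ext.
  apply (rc_rec (fun n r => n + nth 0 r 0)%nat (fun r => nth 0 r 0%nat) (fun w => S (nth 1 w 0%nat))).
  apply rc_proj. apply rc_S, rc_proj. reflexivity. reflexivity.
  reflexivity.
Qed.

Lemma rc_plus g1 g2 : rc g1 -> rc g2 -> rc (fun v => g1 v + g2 v)%nat.
Proof. intros H1 H2. exact (rc_comp2 _ _ _ rc_add H1 H2). Qed.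

Lemma rc_pred : rc (fun v => pred (nth 0 v 0%nat)).
Proof.
  eapply rc_ext.
  apply (rc_rec (fun n r => pred n) (fun r => 0%nat) (fun w => nth 0 w 0%nat)).
  apply rc_zero. apply rc_proj. reflexivity. reflexivity. reflexivity.
Qed.

Lemma rc_sub0 : rc (fun v => nth 1 v 0 - nth 0 v 0)%nat.
Proof.
  eapply rc_ext.
  apply (rc_rec (fun n r => nth 0 r 0 - n)%nat (fun r => nth 0 r 0%nat) (fun w => pred (nth 1 w 0%nat))).
  apply rc_proj. exact (rc_comp1 _ _ rc_pred (rc_proj 1)).
  intro; lia. intros; simpl; lia. reflexivity.
Qed.

Lemma rc_minus g1 g2 : rc g1 -> rc g2 -> rc (fun v => g1 v - g2 v)%nat.
Proof. intros H1 H2. exact (rc_comp2 _ _ _ rc_sub0 H2 H1). Qed.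

Lemma rc_mul0 : rc (fun v => nth 0 v 0 * nth 1 v 0)%nat.
Proof.
  eapply rc_ext.
  apply (rc_rec (fun n r => n * nth 0 r 0)%nat (fun r => 0%nat) (fun w => nth 1 w 0 + nth 2 w 0)%nat).
  apply rc_zero. apply rc_plus; apply rc_proj. reflexivity. intros; simpl; lia. reflexivity.
Qed.

Lemma rc_mult g1 g2 : rc g1 -> rc g2 -> rc (fun v => g1 v * g2 v)%nat.
Proof. intros H1 H2. exact (rc_comp2 _ _ _ rc_mul0 H1 H2). Qed.

Lemma rc_pow0 : rc (fun v => nth 1 v 0 ^ nth 0 v 0)%nat.
Proof.
  eapply rc_ext.
  apply (rc_rec (fun n r => nth 0 r 0 ^ n)%nat (fun r => 1%nat) (fun w => nth 1 w 0 * nth 2 w 0)%nat).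
  apply rc_const. apply rc_mult; apply rc_proj. reflexivity. intros; simpl; lia. reflexivity.
Qed.

Lemma rc_power g1 g2 : rc g1 -> rc g2 -> rc (fun v => g1 v ^ g2 v)%nat.
Proof. intros H1 H2. exact (rc_comp2 _ _ _ rc_pow0 H2 H1). Qed.

Fixpoint par (n : nat) : nat := match n with O => O | S n => 1 - par n end.
Fixpoint hlf (n : nat) : nat := match n with O => O | S n => hlf n + par n end.
Fixpoint tri (n : nat) : nat := match n with O => O | S n => tri n + S n end.

Lemma rc_par g : rc g -> rc (fun v => par (g v)).
Proof.
  intro H. apply (rc_comp1 (fun v => par (nth 0 v 0%nat))); auto.
  eapply rc_ext.
  apply (rc_rec (fun n r => par n) (fun r => 0%nat) (fun w => 1 - nth 1 w 0)%nat).
  apply rc_zero. apply rc_minus; [apply rc_const|apply rc_proj]. reflexivity. reflexivity. reflexivity.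
Qed.

Lemma rc_hlf g : rc g -> rc (fun v => hlf (g v)).
Proof.
  intro H. apply (rc_comp1 (fun v => hlf (nth 0 v 0%nat))); auto.
  eapply rc_ext.
  apply (rc_rec (fun n r => hlf n) (fun r => 0%nat) (fun w => nth 1 w 0 + par (nth 0 w 0))%nat).
  apply rc_zero. apply rc_plus; [apply rc_proj|apply rc_par, rc_proj]. reflexivity. reflexivity. reflexivity.
Qed.

Lemma rc_tri g : rc g -> rc (fun v => tri (g v)).
Proof.
  intro H. apply (rc_comp1 (fun v => tri (nth 0 v 0%nat))); auto.
  eapply rc_ext.
  apply (rc_rec (fun n r => tri n) (fun r => 0%nat) (fun w => nth 1 w 0 + S (nth 0 w 0))%nat).
  apply rc_zero. apply rc_plus; [apply rc_proj|apply rc_S, rc_proj]. reflexivity. reflexivity. reflexivity.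
Qed.

Lemma rc_iter g1 g2 : rc g1 -> rc g2 -> rc (fun v => Nat.iter (g1 v) hlf (g2 v)).
Proof.
  intros H1 H2. apply (rc_comp2 (fun v => Nat.iter (nth 0 v 0%nat) hlf (nth 1 v 0%nat))); auto.
  eapply rc_ext.
  apply (rc_rec (fun n r => Nat.iter n hlf (nth 0 r 0%nat)) (fun r => nth 0 r 0%nat) (fun w => hlf (nth 1 w 0%nat))).
  apply rc_proj. apply rc_hlf, rc_proj. reflexivity. reflexivity. reflexivity.
Qed.

Definition eqn (x y : nat) : nat := (1 - ((x - y) + (y - x)))%nat.

Lemma rc_eqn g1 g2 : rc g1 -> rc g2 -> rc (fun v => eqn (g1 v) (g2 v)).
Proof.
  intros H1 H2. unfold eqn. apply rc_minus. apply rc_const.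
  apply rc_plus; apply rc_minus; auto.
Qed.

Definition om (omega : path) (n : nat) : nat := nat_of_bool (omega n).

Lemma rc_om omega g : recursive_path omega -> rc g -> rc (fun v => om omega (g v)).
Proof.
  intros [c Hc] H. apply (rc_comp1 (fun v => om omega (nth 0 v 0%nat))); auto.
  exists (CComp c [CProj 0]). intro v. apply ev_comp with (ws := [nth 0 v 0%nat]).
  repeat constructor. apply Hc.
Qed.

Fixpoint cntf (omega : path) (i k e : nat) : nat :=
  match k with O => O | S k => cntf omega i k e + eqn (om omega (i + k)) (par (Nat.iter k hlf e)) end.

Lemma rc_cnt omega g1 g2 : recursive_path omega -> rc g1 -> rc g2 ->
  rc (fun v => cntf omega 0 (g1 v) (g2 v)).
Proof.
  intros Ho H1 H2. apply (rc_comp2 (fun v => cntf omega 0 (nth 0 v 0%nat) (nth 1 v 0%nat))); auto.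
  eapply rc_ext.
  apply (rc_rec (fun n r => cntf omega 0 n (nth 0 r 0%nat)) (fun r => 0%nat)
     (fun w => nth 1 w 0 + eqn (om omega (nth 0 w 0)) (par (Nat.iter (nth 0 w 0) hlf (nth 2 w 0))))%nat).
  apply rc_zero. apply rc_plus. apply rc_proj. apply rc_eqn. apply rc_om; auto; apply rc_proj.
  apply rc_par, rc_iter; apply rc_proj.
  reflexivity. reflexivity. reflexivity.
Qed.

Definition E (s : sit) : nat := S (enc_sit s).

Lemma E_cons x s : E (x :: s) = (2 * E s + nat_of_bool x)%nat.
Proof. unfold E; simpl; destruct x; simpl; lia. Qed.

Lemma pow_lin n : (n < 2 ^ n)%nat.
Proof. induction n; simpl; lia. Qed.

Lemma E_bounds s : (2 ^ length s <= E s < 2 ^ S (length s))%nat.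
Proof.
  induction s as [|x s IH]. unfold E; simpl; lia.
  rewrite E_cons. simpl length. rewrite !Nat.pow_succ_r'. rewrite Nat.pow_succ_r' in IH. destruct x; unfold nat_of_bool; lia.
Qed.

Lemma lg_ex : exists lg : list nat -> nat, rc lg /\ forall s, lg [enc_sit s] = length s.
Proof.
  destruct (rc_mu (fun w => (nth 1 w 0 + 2) - 2 ^ (S (nth 0 w 0)))%nat) as [m [Hm Hspec]].
  - apply rc_minus. apply rc_plus; [apply rc_proj|apply rc_const].
    apply rc_power; [apply rc_const|apply rc_S, rc_proj].
  - intro v. exists (nth 0 v 0%nat). cbn [nth]. pose proof (pow_lin (S (nth 0 v 0%nat))). lia.
  - exists m. split; auto. intro s. destruct (Hspec [enc_sit s]) as [H1 H2].
    pose proof (E_bounds s) as HB. unfold E in HB.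
    apply (mu_unique (fun k => (nth 1 (k :: [enc_sit s]) 0 + 2 - 2 ^ S (nth 0 (k :: [enc_sit s]) 0))%nat = 0%nat)); auto.
    + simpl in *. lia.
    + intros k Hk. simpl. assert (2 ^ S k <= 2 ^ length s)%nat by (apply Nat.pow_le_mono_r; lia). simpl in *. lia.
Qed.

Lemma tri_eq n : (tri n * 2 = n * (n + 1))%nat.
Proof. induction n; simpl; lia. Qed.

Lemma tri_mono k l : (k <= l)%nat -> (tri k <= tri l)%nat.
Proof. induction 1; simpl; lia. Qed.

Lemma cpair_tri x y : cpair x y = (tri (x + y) + y)%nat.
Proof. unfold cpair. rewrite <- tri_eq. rewrite Nat.div_mul by lia. reflexivity. Qed.

Lemma tri_lin n : (n <= tri n)%nat.
Proof. induction n; simpl; lia. Qed.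

Lemma unpair_ex : exists fs sn : list nat -> nat, rc fs /\ rc sn /\
  forall x y, fs [cpair x y] = x /\ sn [cpair x y] = y.
Proof.
  destruct (rc_mu (fun w => (nth 1 w 0 + 1) - tri (S (nth 0 w 0)))%nat) as [m [Hm Hspec]].
  - apply rc_minus. apply rc_plus; [apply rc_proj|apply rc_const].
    apply rc_tri, rc_S, rc_proj.
  - intro v. exists (nth 0 v 0%nat). simpl. pose proof (tri_lin (nth 0 v 0%nat)). lia.
  - assert (Hw : forall x y, m [cpair x y] = (x + y)%nat).
    { intros x y. destruct (Hspec [cpair x y]) as [H1 H2]. rewrite cpair_tri in *.
      apply (mu_unique (fun k => (nth 1 (k :: [tri (x + y) + y]) 0 + 1 - tri (S (nth 0 (k :: [tri (x + y) + y]) 0)))%nat = 0%nat)); auto.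
      + simpl. lia.
      + intros k Hk. simpl. assert (tri (S k) <= tri (x + y))%nat by (apply tri_mono; lia). simpl in *. lia. }
    exists (fun v => m v - (nth 0 v 0 - tri (m v)))%nat, (fun v => nth 0 v 0 - tri (m v))%nat.
    split; [|split].
    + apply rc_minus; auto. apply rc_minus. apply rc_proj. apply rc_tri; auto.
    + apply rc_minus. apply rc_proj. apply rc_tri; auto.
    + intros x y. rewrite Hw. simpl. rewrite cpair_tri. lia.
Qed.

Fixpoint matches (omega : path) (i : nat) (s : sit) : nat :=
  match s with nil => O | y :: s => (eqn (om omega i) (nat_of_bool y) + matches omega (S i) s)%nat end.

Lemma eqn_bool a c : eqn (nat_of_bool a) (nat_of_bool c) = nat_of_bool (Bool.eqb a c).
Proof. destruct a, c; reflexivity. Qed.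

Lemma par_le n : (par n <= 1)%nat.
Proof. induction n; cbn [par]; lia. Qed.

Lemma par_dbl e x : (x <= 1)%nat -> par (2 * e + x) = x /\ hlf (2 * e + x) = e.
Proof.
  intro Hx. induction e.
  - destruct x as [|[|]]; simpl; try lia; auto.
  - replace (2 * S e + x)%nat with (S (S (2 * e + x))) by lia.
    destruct IHe as [H1 H2]. cbn [par hlf]. rewrite H1, H2. split; lia.
Qed.

Lemma cntf_S omega i k e : cntf omega i (S k) e = (cntf omega i k e + eqn (om omega (i + k)) (par (Nat.iter k hlf e)))%nat.
Proof. reflexivity. Qed.

Lemma cntf_cons omega i L e x : (x <= 1)%nat ->
  cntf omega i (S L) (2 * e + x) = (eqn (om omega i) x + cntf omega (S i) L e)%nat.
Proof.
  intro Hx. destruct (par_dbl e x Hx) as [H1 H2]. induction L.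
  - rewrite cntf_S. change (Nat.iter 0 hlf (2 * e + x)%nat) with (2 * e + x)%nat. rewrite H1, Nat.add_0_r. cbn [cntf]. rewrite Nat.add_0_r. lia.
  - rewrite cntf_S, IHL, cntf_S. rewrite Nat.iter_succ_r, H2.
    replace (i + S L)%nat with (S i + L)%nat by lia. lia.
Qed.

Lemma eqn_le x y : (eqn x y <= 1)%nat.
Proof. unfold eqn; lia. Qed.

Lemma matches_cnt omega i s : matches omega i s = cntf omega i (length s) (E s).
Proof.
  revert i. induction s as [|y s IH]; intro i. reflexivity.
  simpl matches. rewrite E_cons. simpl length. rewrite cntf_cons. rewrite IH. reflexivity.
  destruct y; simpl; lia.
Qed.

Lemma matches_le omega i s : (matches omega i s <= length s)%nat.
Proof.
  revert i. induction s as [|y s IH]; intro i; simpl. lia.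
  pose proof (eqn_le (om omega i) (nat_of_bool y)). specialize (IH (S i)). lia.
Qed.

Lemma matches_app omega i s y : matches omega i (s ++ [y]) =
  (matches omega i s + eqn (om omega (i + length s)) (nat_of_bool y))%nat.
Proof.
  revert i. induction s as [|z s IH]; intro i; cbn [matches app length].
  - rewrite !Nat.add_0_r. reflexivity.
  - rewrite IH. replace (S i + length s)%nat with (i + S (length s))%nat by lia. lia.
Qed.

Lemma length_prefix omega n : length (prefix omega n) = n.
Proof. unfold prefix. rewrite length_map, length_seq. reflexivity. Qed.

Lemma matches_prefix omega i n : matches omega i (map omega (seq i n)) = n.
Proof.
  revert i. induction n; intro i; simpl. reflexivity.
  rewrite IHn. unfold om. destruct (omega i); reflexivity.
Qed.

Definition Tm (omega : path) (x : R) (s : sit) : R :=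
  (1 + x) ^ (matches omega 0 s) * (/ 2) ^ (length s - matches omega 0 s).

Definition fac (omega : path) (x : R) (i : nat) (y : bool) : R :=
  if Bool.eqb y (omega i) then 1 + x else / 2.

Lemma Tm_nil omega x : Tm omega x nil = 1.
Proof. unfold Tm. simpl. ring. Qed.

Lemma Tm_app omega x s y : Tm omega x (s ++ [y]) = Tm omega x s * fac omega x (length s) y.
Proof.
  unfold Tm, fac. rewrite matches_app, length_app. simpl length.
  pose proof (matches_le omega 0 s) as Hle.
  set (M := matches omega 0 s) in *. set (L := length s) in *.
  simpl (0 + L)%nat. unfold om.
  destruct (omega L), y; simpl Bool.eqb; cbn [nat_of_bool eqn Nat.sub Nat.add].
  - rewrite Nat.add_1_r. replace (L + 1 - S M)%nat with (L - M)%nat by lia. simpl. ring.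
  - rewrite Nat.add_0_r. replace (L + 1 - M)%nat with (S (L - M)) by lia. simpl. ring.
  - rewrite Nat.add_0_r. replace (L + 1 - M)%nat with (S (L - M)) by lia. simpl. ring.
  - rewrite Nat.add_1_r. replace (L + 1 - S M)%nat with (L - M)%nat by lia. simpl. ring.
Qed.

Lemma Tm_pos omega x s : 0 < x -> 0 < Tm omega x s.
Proof. intro. unfold Tm. apply Rmult_lt_0_compat; apply pow_lt; lra. Qed.

Lemma Tm_prefix omega x n : Tm omega x (prefix omega n) = (1 + x) ^ n.
Proof.
  unfold Tm. rewrite length_prefix. unfold prefix. rewrite matches_prefix.
  rewrite Nat.sub_diag. simpl. ring.
Qed.

Lemma Tm_rat omega N s : (1 <= N)%nat ->
  Tm omega (/ INR N) s =
  (INR ((N + 1) ^ matches omega 0 s) - INR 0) /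
  (INR (N ^ matches omega 0 s * 2 ^ (length s - matches omega 0 s) - 1) + 1).
Proof.
  intro HN. unfold Tm.
  set (M := matches omega 0 s). set (L := length s).
  assert (N ^ M <> 0)%nat by (apply Nat.pow_nonzero; lia).
  assert (2 ^ (L - M) <> 0)%nat by (apply Nat.pow_nonzero; lia).
  assert (HK : (1 <= N ^ M * 2 ^ (L - M))%nat) by nia.
  rewrite minus_INR by exact HK.
  rewrite mult_INR, !pow_INR, plus_INR. simpl (INR 0). simpl (INR 1).
  replace (INR 2) with 2 by (simpl; ring).
  assert (0 < INR N) by (apply lt_0_INR; lia).
  replace (1 + / INR N) with ((INR N + 1) * / INR N) by (field; lra).
  rewrite Rpow_mult_distr, !pow_inv.
  replace (INR N ^ M * 2 ^ (L - M) - 1 + 1) with (INR N ^ M * 2 ^ (L - M)) by ring.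
  assert (INR N ^ M <> 0) by (apply pow_nonzero; lra).
  assert (2 ^ (L - M) <> 0) by (apply pow_nonzero; lra).
  field. auto.
Qed.

Lemma rc_recursive_on {D : Type} (enc : D -> nat) (p : D -> nat) G :
  rc G -> (forall d, p d = G [enc d]) -> recursive_on enc p.
Proof.
  intros [c Hc] Hp. exists (fun n => G [n]). split.
  - exists c. intro n. apply Hc.
  - exact Hp.
Qed.

Lemma nat_big (M : R) : exists n : nat, M < INR n.
Proof.
  destruct (archimed M) as [H _].
  destruct (Z_lt_le_dec 0 (up M)) as [Hp|Hn].
  - exists (Z.to_nat (up M)). rewrite INR_IZR_INZ, Z2Nat.id by lia. exact H.
  - exists 0%nat. apply IZR_le in Hn. simpl. lra.
Qed.

Lemma inv_small (n c : R) : 0 < c -> 2 / c < n -> / n <= c / 2.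
Proof.
  intros Hc Hn. assert (0 < 2 / c) by (unfold Rdiv; apply Rmult_lt_0_compat; [lra|apply Rinv_0_lt_compat; lra]).
  replace (c / 2) with (/ (2 / c)) by (field; lra).
  apply Rinv_le_contravar; lra.
Qed.

Lemma Mf_rc omega lg g : recursive_path omega -> rc lg -> rc g ->
  rc (fun v => cntf omega 0 (lg [g v]) (S (g v))).
Proof.
  intros Ho Hl Hg. apply rc_cnt; auto. apply rc_comp1; auto. apply rc_S; auto.
Qed.

Lemma T_rat_on {D : Type} omega N lg (enc : D -> nat) (sd : D -> sit) (Gh : list nat -> nat) :
  recursive_path omega -> rc lg -> (forall s, lg [enc_sit s] = length s) -> (1 <= N)%nat ->
  rc Gh -> (forall d, Gh [enc d] = enc_sit (sd d)) ->
  recursive_rat_on enc (fun d => Tm omega (/ INR N) (sd d)).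
Proof.
  intros Ho Hl Hls HN HG HGs.
  set (Mv := fun v => cntf omega 0 (lg [Gh v]) (S (Gh v))).
  assert (HM : rc Mv) by (apply Mf_rc; auto).
  assert (HMs : forall d, Mv [enc d] = matches omega 0 (sd d)).
  { intro d. unfold Mv. rewrite HGs, Hls, matches_cnt. reflexivity. }
  assert (HLs : forall d, lg [Gh [enc d]] = length (sd d)).
  { intro d. rewrite HGs, Hls. reflexivity. }
  exists (fun d => (N + 1) ^ Mv [enc d])%nat, (fun _ => 0%nat),
         (fun d => N ^ Mv [enc d] * 2 ^ (lg [Gh [enc d]] - Mv [enc d]) - 1)%nat.
  split; [|split; [|split]].
  - apply (rc_recursive_on enc _ (fun v => (N + 1) ^ Mv v)%nat); auto.
    apply rc_power; auto. apply rc_const.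
  - apply (rc_recursive_on enc _ (fun v => 0%nat)); auto. apply rc_const.
  - apply (rc_recursive_on enc _ (fun v => N ^ Mv v * 2 ^ (lg [Gh v] - Mv v) - 1)%nat); auto.
    apply rc_minus; [|apply rc_const]. apply rc_mult; apply rc_power; auto; try apply rc_const.
    apply rc_minus; auto. apply rc_comp1; auto.
  - intro d. cbv beta. rewrite HMs, HLs. apply Tm_rat; auto.
Qed.

Lemma bernoulli (x : R) (n : nat) : 0 <= x -> 1 + INR n * x <= (1 + x) ^ n.
Proof.
  intro Hx. induction n. simpl. lra.
  rewrite S_INR. simpl pow.
  assert (0 <= INR n) by apply pos_INR.
  assert (0 <= INR n * x * x) by (apply Rmult_le_pos; [apply Rmult_le_pos|]; lra).
  nra.
Qed.

Lemma tests_exist omega a b : 0 < a -> a <= b -> b < 1 -> recursive_path omega ->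
  exists T, F_C T /\ F_ML T /\ F_wML T /\ test_supermartingale T a b /\
   LimSup_seq (fun n => T (prefix omega n)) = p_infty /\
   exists tau, real_growth_function tau /\
     Rbar_le (Finite 0) (LimSup_seq (fun n => T (prefix omega n) - tau n)).
Proof.
  intros Ha Hab Hb Ho.
  destruct (nat_big (2 / (1 - b) + 2 / a + 1)) as [N HN].
  assert (Hb' : 0 < 2 / (1 - b)) by (unfold Rdiv; apply Rmult_lt_0_compat; [lra|apply Rinv_0_lt_compat; lra]).
  assert (Ha' : 0 < 2 / a) by (unfold Rdiv; apply Rmult_lt_0_compat; [lra|apply Rinv_0_lt_compat; lra]).
  assert (HN1 : (1 <= N)%nat).
  { destruct N. simpl in HN. lra. lia. }
  assert (HNpos : 0 < INR N) by (apply lt_0_INR; lia).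
  set (x := / INR N).
  assert (Hx0 : 0 < x) by (apply Rinv_0_lt_compat; lra).
  assert (Hxb : x <= (1 - b) / 2) by (apply inv_small; lra).
  assert (Hxa : x <= a / 2) by (apply inv_small; lra).
  destruct lg_ex as [lg [Hlg Hlgs]].
  destruct unpair_ex as [fs [sn [Hfs [Hsn Hpair]]]].
  set (T := Tm omega x).
  assert (HTpos : forall s, 0 < T s) by (intro; apply Tm_pos; auto).
  assert (Htp : test_process T).
  { split. apply Tm_nil. intro s; apply Rlt_le, HTpos. }
  exists T. split; [|split; [|split; [|split; [|split]]]].
  -
    split; auto. split; auto.
    apply (T_rat_on omega N lg enc_sit (fun s => s) (fun v => nth 0 v 0%nat)); auto.
    apply rc_proj.
  -
    split; auto. exists (fun s _ => T s). split; [|split].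
    + apply (T_rat_on omega N lg (fun dn : sit * nat => cpair (enc_sit (fst dn)) (snd dn)) (fun dn => fst dn)
        (fun v => fs [nth 0 v 0%nat])); auto.
      apply rc_comp1; auto. apply rc_proj.
      intro d. cbn [nth]. apply (proj1 (Hpair _ _)).
    + intros; apply Rle_refl.
    + intro s. apply is_lim_seq_const.
  -
    exists (fun s y => fac omega x (length s) y). split; [|split].
    + intros s y. unfold fac. destruct (Bool.eqb y (omega (length s))); lra.
    + exists (fun sx _ => fac omega x (length (fst sx)) (snd sx)). split; [|split].
      * set (tv := fun v : list nat => eqn (om omega (lg [fs [fs [nth 0 v 0%nat]]])) (sn [fs [nth 0 v 0%nat]])).
        assert (Htv : rc tv).
        { apply rc_eqn. apply rc_om; auto. apply rc_comp1; auto. apply rc_comp1; auto. apply rc_comp1; auto. apply rc_proj.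
          apply rc_comp1; auto. apply rc_comp1; auto. apply rc_proj. }
        set (enc2 := fun dn : (sit * bool) * nat => cpair (enc_sit_bool (fst dn)) (snd dn)).
        assert (Htvs : forall dn, tv [enc2 dn] = nat_of_bool (Bool.eqb (omega (length (fst (fst dn)))) (snd (fst dn)))).
        { intros [[s y] n]. unfold tv, enc2, enc_sit_bool. simpl fst. simpl snd. cbn [nth].
          rewrite (proj1 (Hpair _ _)). rewrite (proj1 (Hpair _ _)), (proj2 (Hpair _ _)).
          rewrite Hlgs. unfold om. apply eqn_bool. }
        exists (fun dn => tv [enc2 dn] * (N + 1) + (1 - tv [enc2 dn]) * 1)%nat, (fun _ => 0%nat),
               (fun dn => tv [enc2 dn] * (N - 1) + (1 - tv [enc2 dn]) * 1)%nat.
        split; [|split; [|split]].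
        -- apply (rc_recursive_on enc2 _ (fun v => tv v * (N + 1) + (1 - tv v) * 1)%nat); auto.
           apply rc_plus; apply rc_mult; try apply rc_const; auto. apply rc_minus; auto; apply rc_const.
        -- apply (rc_recursive_on enc2 _ (fun v => 0%nat)); auto. apply rc_const.
        -- apply (rc_recursive_on enc2 _ (fun v => tv v * (N - 1) + (1 - tv v) * 1)%nat); auto.
           apply rc_plus; apply rc_mult; try apply rc_const; auto. apply rc_minus; auto; apply rc_const.
        -- intros [[s y] n]. cbv beta. rewrite Htvs. simpl fst. simpl snd. unfold fac.
           destruct (omega (length s)), y; simpl Bool.eqb; simpl nat_of_bool.
           ++ replace (1 * (N + 1) + (1 - 1) * 1)%nat with (N + 1)%nat by lia.
              replace (1 * (N - 1) + (1 - 1) * 1)%nat with (N - 1)%nat by lia.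
              rewrite minus_INR by lia. rewrite plus_INR. simpl INR. unfold x. field. lra.
           ++ replace (0 * (N + 1) + (1 - 0) * 1)%nat with 1%nat by lia.
              replace (0 * (N - 1) + (1 - 0) * 1)%nat with 1%nat by lia. simpl INR. field.
           ++ replace (0 * (N + 1) + (1 - 0) * 1)%nat with 1%nat by lia.
              replace (0 * (N - 1) + (1 - 0) * 1)%nat with 1%nat by lia. simpl INR. field.
           ++ replace (1 * (N + 1) + (1 - 1) * 1)%nat with (N + 1)%nat by lia.
              replace (1 * (N - 1) + (1 - 1) * 1)%nat with (N - 1)%nat by lia.
              rewrite minus_INR by lia. rewrite plus_INR. simpl INR. unfold x. field. lra.
      * intros; apply Rle_refl.
      * intro; apply is_lim_seq_const.
    + split. apply Tm_nil. intros s y. apply Tm_app.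
  -
    split; auto. intros s r Hr. unfold Er, Defs.Delta. cbv beta. unfold T. rewrite !Tm_app. unfold fac.
    pose proof (HTpos s) as Hs. unfold T in Hs. set (t := Tm omega x s) in *.
    destruct (omega (length s)); simpl Bool.eqb.
    + assert (r * x <= x) by nra. nra.
    + assert ((1 - r) * x <= x) by nra. nra.
  -
    apply is_LimSup_seq_unique. apply is_lim_LimSup_seq.
    apply is_lim_seq_ext with (fun n => (1 + x) ^ n).
    intro n. unfold T. rewrite Tm_prefix. reflexivity.
    apply is_lim_seq_geom_p. lra.
  -
    exists (fun n => INR n * x). split.
    + split; [|split; [|split]].
      * exists (fun d _ => INR d * x). split.
        -- exists (fun dn : nat * nat => fs [cpair (fst dn) (snd dn)]), (fun _ => 0%nat), (fun _ => (N - 1)%nat).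
           split; [|split; [|split]].
           ++ apply (rc_recursive_on _ _ (fun v => fs [nth 0 v 0%nat])); auto.
              apply rc_comp1; auto. apply rc_proj.
           ++ apply (rc_recursive_on _ _ (fun v => 0%nat)); auto. apply rc_const.
           ++ apply (rc_recursive_on _ _ (fun v => (N - 1)%nat)); auto. apply rc_const.
           ++ intros [d n]. simpl fst. simpl snd. cbn [nth]. rewrite (proj1 (Hpair _ _)).
              rewrite minus_INR by lia. simpl (INR 0). simpl (INR 1). unfold x. field. lra.
        -- intros d n. rewrite Rminus_diag, Rabs_R0. apply Rinv_0_lt_compat, pow_lt. lra.
      * intro n. apply Rmult_le_pos. apply pos_INR. lra.
      * intros n m Hnm. apply Rmult_le_compat_r. lra. apply le_INR; auto.
      * intro M. destruct (nat_big (M / x)) as [n Hn]. exists n.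
        apply Rmult_lt_reg_r with (/ x). apply Rinv_0_lt_compat; lra.
        rewrite Rmult_assoc, Rinv_r by lra. rewrite Rmult_1_r. exact Hn.
    + rewrite <- (LimSup_seq_const 0). apply LimSup_le. exists 0%nat. intros n _.
      unfold T. rewrite Tm_prefix. pose proof (bernoulli x n). lra.
Qed.

Lemma psum_ext u v n : (forall k, u k = v k) -> psum u n = psum v n.
Proof. intro H. induction n; simpl; auto. rewrite IHn, H. reflexivity. Qed.

Lemma psum_scal u d n : psum (fun k => u k * d) n = psum u n * d.
Proof. induction n; simpl. ring. rewrite IHn. ring. Qed.

Lemma psum_mono u n m : (forall k, 0 <= u k) -> (n <= m)%nat -> psum u n <= psum u m.
Proof. intros Hu. induction 1. lra. simpl. specialize (Hu m). lra. Qed.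

Lemma psum_compl u v n : (forall k, u k + v k = 1) -> psum u n + psum v n = INR n.
Proof.
  intro H. induction n. simpl. ring.
  rewrite S_INR. simpl. specialize (H n). lra.
Qed.

Lemma avg_const (sel u : nat -> R) (d : R) :
  (forall k, sel k * u k = sel k * d) -> is_lim_seq (psum sel) p_infty ->
  is_lim_seq (fun n => psum (fun k => sel k * u k) n / psum sel n) d.
Proof.
  intros Hu Hl. apply is_lim_seq_ext_loc with (fun _ => d).
  - apply is_lim_seq_spec in Hl. destruct (Hl 0) as [N HN]. exists N. intros n Hn.
    specialize (HN n Hn). rewrite (psum_ext _ (fun k => sel k * d)) by auto.
    rewrite psum_scal. field. lra.
  - apply is_lim_seq_const.
Qed.

Lemma not_inf_bounded u : (forall k, 0 <= u k) -> ~ is_lim_seq (psum u) p_infty ->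
  exists B, forall n, psum u n <= B.
Proof.
  intros Hu Hn. apply NNPP. intro Hc. apply Hn. apply is_lim_seq_spec. intro M.
  destruct (not_all_ex_not _ _ (fun H => Hc (ex_intro _ M H))) as [n Hm].
  exists n. intros m Hm'. pose proof (psum_mono u n m Hu Hm'). lra.
Qed.

Definition Sc (omega : path) (c : bool) : selection := fun s => Bool.eqb (omega (length s)) c.

Lemma Sc_rec omega c : recursive_path omega -> rec_temporal (Sc omega c).
Proof.
  intro Ho. destruct lg_ex as [lg [Hlg Hlgs]]. split.
  - apply (rc_recursive_on enc_sit _ (fun v => eqn (om omega (lg [nth 0 v 0%nat])) (nat_of_bool c))).
    + apply rc_eqn. apply rc_om; auto. apply rc_comp1; auto. apply rc_proj. apply rc_const.
    + intro s. cbn [nth]. rewrite Hlgs. unfold om, Sc. rewrite eqn_bool. reflexivity.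
  - intros s t H. unfold Sc. rewrite H. reflexivity.
Qed.

Lemma sel_lemma omega a b (SS : selection -> Prop) : 0 < a -> b < 1 -> recursive_path omega ->
  (forall S, rec_temporal S -> SS S) -> sel_random SS omega a b -> False.
Proof.
  intros Ha Hb Ho HSS Hr.
  assert (Hsel : forall c k, b2R (Sc omega c (prefix omega k)) = b2R (Bool.eqb (omega k) c)).
  { intros c k. unfold Sc. rewrite length_prefix. reflexivity. }
  assert (Hprod : forall c k t, b2R (Sc omega c (prefix omega k)) * (b2R (omega k) - t) =
                                 b2R (Sc omega c (prefix omega k)) * (b2R c - t)).
  { intros c k t. rewrite Hsel. destruct (omega k), c; simpl; ring. }
  destruct (classic (is_lim_seq (psum (fun k => b2R (Sc omega true (prefix omega k)))) p_infty)) as [Hi|Hni].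
  - destruct (Hr (Sc omega true) (HSS _ (Sc_rec omega true Ho)) Hi) as [_ H2].
    rewrite (is_LimSup_seq_unique _ (1 - b)) in H2.
    + simpl in H2. lra.
    + apply is_lim_LimSup_seq. apply (avg_const _ (fun k => b2R (omega k) - b) (b2R true - b)).
      intro k. apply Hprod. exact Hi.
  - assert (Hf : is_lim_seq (psum (fun k => b2R (Sc omega false (prefix omega k)))) p_infty).
    { assert (Hnn : forall k, 0 <= b2R (Sc omega true (prefix omega k))).
      { intro k. destruct (Sc omega true (prefix omega k)); simpl; lra. }
      destruct (not_inf_bounded _ Hnn Hni) as [B HB].
      apply is_lim_seq_spec. intro M. destruct (nat_big (M + B)) as [N HN]. exists N. intros n Hn.
      pose proof (psum_compl (fun k => b2R (Sc omega true (prefix omega k)))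
                             (fun k => b2R (Sc omega false (prefix omega k))) n) as Hc.
      assert (Hc' : psum (fun k => b2R (Sc omega true (prefix omega k))) n +
                    psum (fun k => b2R (Sc omega false (prefix omega k))) n = INR n).
      { apply Hc. intro k. rewrite !Hsel. destruct (omega k); simpl; ring. }
      specialize (HB n). apply le_INR in Hn. lra. }
    destruct (Hr (Sc omega false) (HSS _ (Sc_rec omega false Ho)) Hf) as [H1 _].
    rewrite (is_LimInf_seq_unique _ (- a)) in H1.
    + simpl in H1. lra.
    + apply is_lim_LimInf_seq. apply (avg_const _ (fun k => b2R (omega k) - a) (- a)).
      intro k. rewrite Hprod. simpl. f_equal. ring. exact Hf.
Qed.

Theorem proposition26 (omega : path) (a b : R)
  (Ha : 0 < a) (Hab : a <= b) (Hb : b < 1) :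
  (wCH_random omega a b -> ~ recursive_path omega) /\
  (forall SS : selection -> Prop,
      countable_set SS -> (forall S, rec_temporal S -> SS S) ->
      sel_random SS omega a b -> ~ recursive_path omega) /\
  (ML_random omega a b -> ~ recursive_path omega) /\
  (wML_random omega a b -> ~ recursive_path omega) /\
  (C_random omega a b -> ~ recursive_path omega) /\
  (S_random omega a b -> ~ recursive_path omega).
Proof.
  split; [|split; [|split; [|split; [|split]]]].
  - intros H Ho. exact (sel_lemma omega a b rec_temporal Ha Hb Ho (fun S HS => HS) H).
  - intros SS _ HSS H Ho. exact (sel_lemma omega a b SS Ha Hb Ho HSS H).
  - intros H Ho. destruct (tests_exist omega a b Ha Hab Hb Ho) as [T [HC [HML [HwML [HT [HL _]]]]]].
    apply H. exists T. auto.
  - intros H Ho. destruct (tests_exist omega a b Ha Hab Hb Ho) as [T [HC [HML [HwML [HT [HL _]]]]]].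
    apply H. exists T. auto.
  - intros H Ho. destruct (tests_exist omega a b Ha Hab Hb Ho) as [T [HC [HML [HwML [HT [HL _]]]]]].
    apply H. exists T. auto.
  - intros H Ho. destruct (tests_exist omega a b Ha Hab Hb Ho) as [T [HC [HML [HwML [HT [HL [tau [Htau Hle]]]]]]]].
    apply H. exists T, tau. auto.
Qed.
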